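(* Let $m,r,\delta\ge 1$, $n=m(r+1)$, let $q$ be a prime power, $\alpha$ a primitive element of $\mathbb{F}_q$, and $\beta\in\mathbb{F}_q$ an element of multiplicative order $\psi$ with $\psi\ge r+1$ (so $\psi\mid q-1$), and assume $q-1\ge \psi m$. Let $H_0$ be the $\delta\times(r+1)$ matrix with $(a,b)$ entry $\beta^{ab}$ for $0\le a\le\delta-1$, $0\le b\le r$, and for $j=1,\dots,m$ let $H_j$ be the $2\times(r+1)$ matrix whose first row is $(1,\beta^{\delta},\beta^{2\delta},\dots,\beta^{r\delta})$ and whose second row is $(\alpha^{j-1},\alpha^{j-1}\beta^{-1},\alpha^{j-1}\beta^{-2},\dots,\alpha^{j-1}\beta^{-r})$. Let $\mathcal{C}$ be the code of length $n$ with parity-check matrix $$H=\begin{pmatrix} H_0&0&\cdots&0\\ 0&H_0&\cdots&0\\ \vdots&&\ddots&\vdots\\ 0&0&\cdots&H_0\\ H_1&H_2&\cdots&H_m\end{pmatrix}.$$ Then $\mathcal{C}$ is a maximally recoverable (partial MDS) code: it corrects every erasure pattern consisting of $\delta$ erasures in each of the $m$ local groups (the blocks of $r+1$ consecutive coordinates) together with $2$ additional erasures at arbitrary further positions. *)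

(* Defs.v *)
From HB Require Import structures.
From mathcomp Require Import all_boot all_order all_algebra.
Unset Implicit Arguments. Unset Printing Implicit Defensive.
Import GRing.Theory.
Local Open Scope ring_scope.

(* Coordinates of the code of length n = m(r+1) are 'I_(m*(r+1)); coordinate i
   lies in local group  i %/ (r+1)  (0-based, group j+1 in the paper) at
   position  i %% (r+1)  inside the group. *)

(* Parity-check matrix H, rows 'I_(m*delta + 2):
   rows k < m*delta : block-diagonal copies of H_0, row a = k %% delta of the
     copy in group g = k %/ delta, entry beta^(a*b);
   row m*delta      : first rows of H_1..H_m, entry beta^(delta*b);
   row m*delta+1    : second rows of H_j, entry alpha^(j-1) * beta^(-b). *)
Definition pmds_H (F : fieldType) (m r delta : nat) (alpha beta : F)
  : 'M[F]_(m * delta + 2, m * (r + 1)) :=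
  \matrix_(k, i)
    let g := ((i : nat) %/ (r + 1))%N in
    let b := ((i : nat) %% (r + 1))%N in
    if ((k : nat) < m * delta)%N then
      (if ((k : nat) %/ delta == g)%N then beta ^+ (((k : nat) %% delta) * b) else 0)
    else if ((k : nat) == m * delta)%N then beta ^+ (delta * b)
    else alpha ^+ g * beta ^- b.

Definition pmds_code (F : fieldType) (m r delta : nat) (alpha beta : F)
  (c : 'rV[F]_(m * (r + 1))) : Prop :=
  pmds_H F m r delta alpha beta *m c^T = 0.

(* A code C (a predicate on words) corrects the erasure pattern E iff no
   nonzero codeword is supported inside E (equivalently, every codeword is
   determined by its unerased coordinates). *)
Definition corrects_erasures (F : fieldType) (N : nat)
  (C : 'rV[F]_N -> Prop) (E : {set 'I_N}) : Prop :=
  forall c, C c -> (forall i, i \notin E -> c ord0 i = 0) -> c = 0.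

(* Erasure pattern: delta erasures in each of the m local groups plus 2
   further erasures, i.e. |E| = m*delta + 2 and every group contains at
   least delta erased positions. *)
Definition pmds_pattern (m r delta : nat) (E : {set 'I_(m * (r + 1))}) : Prop :=
  #|E| = (m * delta + 2)%N /\
  forall g : 'I_m, (delta <= #|[set i in E | ((i : nat) %/ (r + 1) == g)%N]|)%N.

(* Main.v *)
Require Import Defs.
From HB Require Import structures.
From mathcomp Require Import all_boot all_order all_algebra.
From mathcomp Require Import zify ring.
Import GRing.Theory.
Local Open Scope ring_scope.
Lemma polysum (F : fieldType) (I : finType) (S : {set I}) (x v : I -> F)
  (p : {poly F}) (n : nat) : (size p <= n)%N ->
  \sum_(i in S) v i * p.[x i] = \sum_(k < n) p`_k * \sum_(i in S) v i * x i ^+ k.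
Proof.
move=> hp.
under eq_bigr => i _ do rewrite (horner_coef_wide _ hp) mulr_sumr.
rewrite exchange_big; apply: eq_bigr => k _; rewrite mulr_sumr.
by apply: eq_bigr => i _; rewrite mulrCA.
Qed.

Lemma vander0 (F : fieldType) (I : finType) (S : {set I}) (x v : I -> F) :
  {in S &, injective x} ->
  (forall k, (k < #|S|)%N -> \sum_(i in S) v i * x i ^+ k = 0) ->
  forall j, j \in S -> v j = 0.
Proof.
move=> inj hk j jS.
pose Q := \prod_(z <- [seq x i | i in S :\ j]) ('X - z%:P).
have hsz : (size Q <= #|S|)%N.
  by rewrite /Q size_prod_XsubC size_image (cardsD1 j S) jS.
have := @polysum F I S x v Q _ hsz.
rewrite [X in _ = X]big1; last by move=> k _; rewrite hk // mulr0.
rewrite (bigD1 j) //= big1 ?addr0.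
  move/eqP; rewrite mulf_eq0 => /orP[/eqP //|].
  move/eqP/rootP; rewrite root_prod_XsubC => /imageP[i].
  by rewrite !inE => /andP[ij iS] /inj => /(_ jS iS) eqji; rewrite eqji eqxx in ij.
move=> i /andP[iS ij]; apply/eqP; rewrite mulf_eq0; apply/orP; right.
apply/eqP/rootP; rewrite root_prod_XsubC; apply: image_f.
by rewrite !inE ij.
Qed.

Lemma zero_sum (m : nat) (P : pred 'I_m) (h : 'I_m -> nat) :
  (\sum_(g | P g) h g = 0)%N -> forall g, P g -> h g = 0%N.
Proof.
move/eqP; rewrite sum_nat_eq0 => /forallP H g Pg.
by have := H g; rewrite Pg => /eqP.
Qed.

Lemma excess (m d : nat) (f : 'I_m -> nat) : (forall g, d <= f g)%N ->
  (\sum_g f g = m * d + 2)%N ->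
  (exists g1, f g1 = d + 2 /\ forall g, g != g1 -> (f g <= d)%N)%N \/
  (exists g1 g2, g1 != g2 /\ f g1 = d + 1 /\ f g2 = d + 1 /\
     forall g, g != g1 -> g != g2 -> (f g <= d)%N)%N.
Proof.
move=> hd hs.
pose h g := (f g - d)%N.
have hf g : f g = (h g + d)%N by rewrite /h subnK.
have hsum : (\sum_g h g = 2)%N.
  move: hs; under eq_bigr => g _ do rewrite hf.
  rewrite big_split /= sum_nat_const card_ord; lia.
case: (pickP (fun g => 0 < h g)%N) => [g1 hg1|h0]; last first.
  by move: hsum; rewrite big1 // => g _; move: (h0 g) => /= /negbT; rewrite lt0n negbK => /eqP.
move: hsum; rewrite (bigD1 g1) //=.
have [hge|hlt] := leqP 2 (h g1).
  move=> hsum; left; exists g1; split; first by rewrite hf; lia.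
  move=> g gg1; have hz : (\sum_(g | g != g1) h g = 0)%N.
    by move: hsum hge; set X := (\sum_(g | g != g1) h g); lia.
  by have := @zero_sum m _ h hz g gg1; rewrite hf => ->.
move=> hsum.
have hr : (\sum_(g | g != g1) h g = 1)%N.
  by move: hsum hlt hg1; set X := (\sum_(g | g != g1) h g); lia.
case: (pickP (fun g => (g != g1) && (0 < h g))%N) => [g2 /andP[g21 hg2]|h0]; last first.
  move: hr; rewrite big1 // => g gg1; move: (h0 g) => /= /negbT.
  by rewrite gg1 /= lt0n negbK => /eqP.
move: hr; rewrite (bigD1 g2) //= => hr.
right; exists g1, g2; split; first by rewrite eq_sym.
split; first by rewrite hf; lia.
split; first by rewrite hf; lia.
move=> g gg1 gg2.
have hz : (\sum_(g | (g != g1) && (g != g2)) h g = 0)%N.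
  by move: hr hg2; set X := (\sum_(g | (g != g1) && (g != g2)) h g); lia.
by have := @zero_sum m _ h hz g ltac:(by apply/andP); rewrite hf => ->.
Qed.

Lemma relQ (F : fieldType) (I : finType) (S : {set I}) (x c : I -> F) (d : nat) :
  (forall i, i \in S -> x i != 0) -> #|S| = d.+1 ->
  (forall k, (k < d)%N -> \sum_(i in S) c i * x i ^+ k = 0) ->
  \sum_(i in S) c i * x i ^+ d + (\prod_(i in S) - x i) * \sum_(i in S) c i / x i = 0.
Proof.
move=> hx hS hk.
pose Q := \prod_(z <- [seq x i | i in S]) ('X - z%:P).
have hsz : (size Q <= d.+2)%N by rewrite /Q size_prod_XsubC size_image hS.
have := @polysum F I S x (fun i => c i / x i) Q _ hsz.
rewrite big1; last first.
  move=> i iS; apply/eqP; rewrite mulf_eq0; apply/orP; right.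
  by apply/eqP/rootP; rewrite root_prod_XsubC; apply: image_f.
move=> h; rewrite big_ord_recl big_ord_recr /= in h.
have hsh k : \sum_(i in S) c i / x i * x i ^+ k.+1 = \sum_(i in S) c i * x i ^+ k.
  by apply: eq_bigr => i iS; rewrite exprS mulrA mulfVK // hx.
rewrite [X in _ + (X + _)]big1 in h; last first.
  by move=> k _; rewrite /bump /= add1n hsh hk ?mulr0.
have hQ0 : Q`_0 = \prod_(i in S) - x i.
  by rewrite -horner_coef0 /Q horner_prod big_image; apply: eq_bigr => i _; rewrite hornerXsubC sub0r.
have hQd : Q`_(d.+1) = 1.
  have := monic_prod_XsubC [seq x i | i in S] xpredT id.
  move/monicP; rewrite lead_coefE /Q size_prod_XsubC size_image hS.
  by rewrite (eq_bigr (fun z => 'X - z%:P)).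
move: h; rewrite /bump /= add1n hsh hQ0 hQd mul1r add0r.
have h0 : \sum_(i in S) c i / x i * x i ^+ 0 = \sum_(i in S) c i / x i.
  by apply: eq_bigr => i _; rewrite expr0 mulr1.
by rewrite h0 => h; rewrite addrC -h.
Qed.

Lemma alg4 (F : fieldType) (s1 s2 t1 t2 q1 q2 a1 a2 : F) :
  s1 + q1 * t1 = 0 -> s2 + q2 * t2 = 0 -> s1 + s2 = 0 ->
  a1 * t1 + a2 * t2 = 0 -> q1 * a2 - q2 * a1 != 0 -> a2 != 0 ->
  [/\ s1 = 0, s2 = 0, t1 = 0 & t2 = 0].
Proof.
move=> e1 e2 e3 e4 hD ha2.
have key : t1 * (q1 * a2 - q2 * a1) =
  a2 * ((s1 + q1 * t1) + (s2 + q2 * t2) - (s1 + s2)) - q2 * (a1 * t1 + a2 * t2).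
  by ring.
rewrite e1 e2 e3 e4 !addr0 subr0 !mulr0 subr0 in key.
have t10 : t1 = 0 by move/eqP: key; rewrite mulf_eq0 (negbTE hD) orbF => /eqP.
rewrite t10 mulr0 add0r in e4.
have t20 : t2 = 0 by move/eqP: e4; rewrite mulf_eq0 (negbTE ha2) => /eqP.
rewrite t10 mulr0 addr0 in e1; rewrite t20 mulr0 addr0 in e2.
by split.
Qed.

Theorem mainTheorem5 (F : finFieldType) (m r delta psi : nat) (alpha beta : F) :
  (1 <= m)%N -> (1 <= r)%N -> (1 <= delta)%N ->
  (#|F|.-1).-primitive_root alpha ->
  psi.-primitive_root beta ->
  (r + 1 <= psi)%N ->
  (psi * m <= #|F|.-1)%N ->
  forall E : {set 'I_(m * (r + 1))},
    pmds_pattern m r delta E ->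
    @corrects_erasures F (m * (r + 1)) (pmds_code F m r delta alpha beta) E.
Proof.
move=> hm hr hd hal hbe hpsi hq E [hcard hgrp] c; rewrite /pmds_code => hc hout.
have psi0 : (0 < psi)%N by lia.
have q0 : (0 < #|F|.-1)%N by nia.
have be0 : beta != 0.
  apply/eqP => b0; move: (prim_expr_order hbe); rewrite b0 expr0n.
  by rewrite eqn0Ngt psi0 /= => /eqP; rewrite eq_sym oner_eq0.
have al0 : alpha != 0.
  apply/eqP => b0; move: (prim_expr_order hal); rewrite b0 expr0n.
  by rewrite eqn0Ngt q0 /= => /eqP; rewrite eq_sym oner_eq0.
have grpP (i : 'I_(m * (r + 1))) : ((i : nat) %/ (r + 1) < m)%N.
  by rewrite ltn_divLR ?addn1 // -addn1 ltn_ord.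
pose grpo (i : 'I_(m * (r + 1))) : 'I_m := Ordinal (grpP i).
pose x (i : 'I_(m * (r + 1))) := beta ^+ ((i : nat) %% (r + 1)).
pose S (g : 'I_m) := [set i in E | ((i : nat) %/ (r + 1) == g)%N].
have x0 i : x i != 0 by rewrite expf_neq0.
have hrow k : \sum_j pmds_H F m r delta alpha beta k j * c ord0 j = 0.
  move/matrixP: hc => /(_ k ord0); rewrite [LHS]mxE [RHS]mxE => h; rewrite -[RHS]h.
  by apply: eq_bigr => j _; rewrite !mxE.
have hloc (g : 'I_m) a : (a < delta)%N -> \sum_(i in S g) c ord0 i * x i ^+ a = 0.
  move=> ha.
  have hk : (g * delta + a < m * delta + 2)%N.
    have := ltn_ord g; nia.
  have hk' : (g * delta + a < m * delta)%N.
    have := ltn_ord g; nia.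
  have hdiv : ((g * delta + a) %/ delta = g)%N.
    by rewrite divnMDl // divn_small // addn0.
  have hmod : ((g * delta + a) %% delta = a)%N.
    by rewrite modnMDl modn_small.
  have := hrow (Ordinal hk) => h; rewrite -[RHS]h.
  rewrite big_mkcond; apply: eq_bigr => j _; rewrite mxE /= inE hk' hdiv hmod.
  case hE: (j \in E); last by rewrite hout ?hE // mulr0.
  rewrite /= eq_sym; case: ifP => _; last by rewrite mul0r.
  by rewrite /x -exprM [(_ * a)%N]mulnC mulrC.
have hg1 : \sum_j c ord0 j * x j ^+ delta = 0.
  have hk : (m * delta < m * delta + 2)%N by lia.
  have := hrow (Ordinal hk) => h; rewrite -[RHS]h.
  apply: eq_bigr => j _; rewrite mxE /= ltnn eqxx.
  by rewrite /x -exprM [(_ * delta)%N]mulnC mulrC.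
have hg2 : \sum_j c ord0 j * (alpha ^+ ((j : nat) %/ (r + 1)) * (x j)^-1) = 0.
  have hk : (m * delta + 1 < m * delta + 2)%N by lia.
  have := hrow (Ordinal hk) => h; rewrite -[RHS]h.
  apply: eq_bigr => j _; rewrite mxE /=.
  have -> : (m * delta + 1 < m * delta)%N = false by lia.
  have -> : (m * delta + 1 == m * delta)%N = false by lia.
  by rewrite mulrC.
have hinj g : {in S g &, injective x}.
  move=> i j; rewrite !inE => /andP[_ /eqP hi] /andP[_ /eqP hj] /eqP.
  have lti : ((i : nat) %% (r + 1) < psi)%N.
    by apply: (leq_trans _ hpsi); rewrite ltn_mod addn1.
  have ltj : ((j : nat) %% (r + 1) < psi)%N.
    by apply: (leq_trans _ hpsi); rewrite ltn_mod addn1.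
  rewrite /x (eq_prim_root_expr hbe) (modn_small lti) (modn_small ltj).
  move=> /eqP hij; apply: ord_inj.
  by rewrite (divn_eq i (r + 1)) (divn_eq j (r + 1)) hi hj hij.
have hzero g : (#|S g| <= delta)%N -> forall i, i \in S g -> c ord0 i = 0.
  move=> hs; apply: (@vander0 F _ (S g) x (fun i => c ord0 i) (hinj g)).
  by move=> k hk; apply: hloc; apply: leq_trans hs.
have hsupp j : c ord0 j != 0 -> j \in S (grpo j).
  move=> hcj; rewrite inE eqxx andbT; apply/negPn/negP => hE.
  by move: hcj; rewrite hout // eqxx.
have hsumS : (\sum_g #|S g| = m * delta + 2)%N.
  rewrite -hcard -sum1_card (partition_big grpo (fun _ => true)) //=.
  apply: eq_bigr => g _; rewrite -sum1_card; apply: eq_bigl => i.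
  by rewrite inE.
have hginS g j : j \in S g -> ((j : nat) %/ (r + 1))%N = g.
  by rewrite inE => /andP[_ /eqP].
have hgrpo g j : j \in S g -> grpo j = g.
  by move=> /hginS h; apply: ord_inj.
have hxS g i : i \in S g -> x i != 0 by move=> _; apply: x0.
have [[g1 [h1 hoth]]|[g1 [g2 [ne [h1 [h2 hoth]]]]]] :=
  @excess m delta (fun g => #|S g|) hgrp hsumS.
- have hout1 j : j \notin S g1 -> c ord0 j = 0.
    move=> jn; apply/eqP/negPn/negP => hcj.
    have js := hsupp j hcj.
    case: (grpo j =P g1) => [e|nej]; first by rewrite -e js in jn.
    by move: hcj; rewrite (hzero (grpo j) (hoth _ (introN eqP nej)) j js) eqxx.
  have hres (G : 'I_(m * (r + 1)) -> F) :
      \sum_j c ord0 j * G j = \sum_(j in S g1) c ord0 j * G j.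
    rewrite [RHS]big_mkcond; apply: eq_bigr => j _; case: ifP => // /negbT jn.
    by rewrite hout1 // mul0r.
  have hsig : \sum_(j in S g1) c ord0 j * x j ^+ delta = 0 by rewrite -hres.
  have htau : \sum_(j in S g1) c ord0 j / x j = 0.
    move: hg2; rewrite hres.
    rewrite (eq_bigr (fun j => alpha ^+ g1 * (c ord0 j / x j))); last first.
      by move=> j /hginS ->; rewrite mulrCA mulrA.
    by rewrite -mulr_sumr => /eqP; rewrite mulf_eq0 expf_eq0 (negbTE al0) andbF => /eqP.
  have hv := @vander0 F _ (S g1) x (fun j => c ord0 j / x j) (hinj g1).
  have hz : forall j, j \in S g1 -> c ord0 j / x j = 0.
    apply: hv; rewrite h1 => k hk.
    case: k hk => [|k] hk.
      by rewrite -[RHS]htau; apply: eq_bigr => j _; rewrite expr0 mulr1.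
    rewrite -[RHS](_ : \sum_(j in S g1) c ord0 j * x j ^+ k = 0).
      by apply: eq_bigr => j _; rewrite exprS mulrA mulfVK.
    have [kd|kd] := ltnP k delta; first by apply: hloc.
    by have -> : k = delta by lia.
  apply/rowP => j; rewrite mxE; case: (boolP (j \in S g1)) => [js|jn]; last exact: hout1.
  by move: (hz j js) => /eqP; rewrite mulf_eq0 invr_eq0 (negbTE (x0 j)) orbF => /eqP.
- have hout12 j : j \notin S g1 -> j \notin S g2 -> c ord0 j = 0.
    move=> jn1 jn2; apply/eqP/negPn/negP => hcj.
    have js := hsupp j hcj.
    case: (grpo j =P g1) => [e|nej1]; first by rewrite -e js in jn1.
    case: (grpo j =P g2) => [e|nej2]; first by rewrite -e js in jn2.
    move: hcj; rewrite (hzero (grpo j) (hoth _ (introN eqP nej1) (introN eqP nej2)) j js).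
    by rewrite eqxx.
  have hdis : [disjoint S g1 & S g2].
    rewrite disjoint_subset; apply/subsetP => j j1; rewrite inE; apply/negP => j2.
    by move: ne; rewrite -(hgrpo _ _ j1) -(hgrpo _ _ j2) eqxx.
  have hres (G : 'I_(m * (r + 1)) -> F) : \sum_j c ord0 j * G j =
      \sum_(j in S g1) c ord0 j * G j + \sum_(j in S g2) c ord0 j * G j.
    rewrite -bigU //= [RHS]big_mkcond; apply: eq_bigr => j _; case: ifP => // /negbT.
    by rewrite !inE negb_or => /andP[n1 n2]; rewrite hout12 ?inE // mul0r.
  have hfac g : \sum_(j in S g) c ord0 j * (alpha ^+ ((j : nat) %/ (r + 1)) / x j) =
      alpha ^+ g * \sum_(j in S g) c ord0 j / x j.
    rewrite mulr_sumr; apply: eq_bigr => j /hginS ->.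
    by rewrite mulrCA mulrA.
  have hs12 : \sum_(j in S g1) c ord0 j * x j ^+ delta +
      \sum_(j in S g2) c ord0 j * x j ^+ delta = 0 by rewrite -hres.
  have ht12 : alpha ^+ g1 * \sum_(j in S g1) c ord0 j / x j +
      alpha ^+ g2 * \sum_(j in S g2) c ord0 j / x j = 0 by rewrite -!hfac -hres.
  have {}h1 : #|S g1| = delta.+1 by rewrite h1 addn1.
  have {}h2 : #|S g2| = delta.+1 by rewrite h2 addn1.
  have hr1 := @relQ F _ (S g1) x (fun j => c ord0 j) delta (hxS g1) h1 (hloc g1).
  have hr2 := @relQ F _ (S g2) x (fun j => c ord0 j) delta (hxS g2) h2 (hloc g2).
  have hqq g : #|S g| = delta.+1 -> \prod_(i in S g) - x i =
      (-1) ^+ delta.+1 * beta ^+ (\sum_(i in S g) ((i : nat) %% (r + 1)))%N.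
    by move=> hs; rewrite prodrN hs prodrXr.
  have hD : \prod_(i in S g1) - x i * alpha ^+ g2 - \prod_(i in S g2) - x i * alpha ^+ g1 != 0.
    rewrite (hqq _ h1) (hqq _ h2) -!mulrA -mulrBr mulf_eq0 negb_or.
    rewrite expf_neq0 ?oppr_eq0 ?oner_eq0 //= subr_eq0.
    apply/negP => /eqP he.
    have hb s : (beta ^+ s) ^+ psi = 1.
      by rewrite -exprM mulnC exprM (prim_expr_order hbe) expr1n.
    move/(congr1 (fun z => z ^+ psi)): he; rewrite !exprMn !hb !mul1r -!exprM.
    move/eqP; rewrite (eq_prim_root_expr hal) !modn_small; first last.
    + by apply: (leq_trans _ hq); rewrite mulnC ltn_pmul2l.
    + by apply: (leq_trans _ hq); rewrite mulnC ltn_pmul2l.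
    rewrite eqn_pmul2r // => /eqP e.
    have e' : g1 = g2 by apply: ord_inj.
    by rewrite e' eqxx in ne.
  have [s10 s20 t10 t20] := @alg4 F _ _ _ _ _ _ _ _ hr1 hr2 hs12 ht12 hD (expf_neq0 _ al0).
  have hfin g : #|S g| = delta.+1 ->
      \sum_(j in S g) c ord0 j * x j ^+ delta = 0 -> forall j, j \in S g -> c ord0 j = 0.
    move=> hs hsig; apply: (@vander0 F _ (S g) x (fun i => c ord0 i) (hinj g)).
    rewrite hs => k; rewrite ltnS leq_eqVlt => /orP[/eqP ->//|hk].
    exact: hloc.
  apply/rowP => j; rewrite mxE.
  case: (boolP (j \in S g1)) => [js|jn1]; first exact: hfin g1 h1 s10 j js.
  case: (boolP (j \in S g2)) => [js|jn2]; first exact: hfin g2 h2 s20 j js.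
  exact: hout12.
Qed.
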